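(* Let $m\ge 2$ and let $v_1,\dots,v_m$ be distinct values. Enforcing GAC on $\mathrm{Precedence}([v_1,\dots,v_m],[X_1,\dots,X_n])$ is strictly stronger than enforcing GAC on each of the constraints $\mathrm{Precedence}([v_i,v_j],[X_1,\dots,X_n])$ for $1\le i<j\le m$. That is: (i) for all finite domains of $X_1,\dots,X_n$, if $\mathrm{Precedence}([v_1,\dots,v_m],[X_1,\dots,X_n])$ is GAC then every $\mathrm{Precedence}([v_i,v_j],[X_1,\dots,X_n])$ with $1\le i<j\le m$ is GAC; and (ii) there exist $n$, $m$, values and domains for which every $\mathrm{Precedence}([v_i,v_j],[X_1,\dots,X_n])$ with $1\le i<j\le m$ is GAC but $\mathrm{Precedence}([v_1,\dots,v_m],[X_1,\dots,X_n])$ is not GAC.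
   Context: $X_1,\dots,X_n$ are finite domain variables, each with a finite domain $D(X_i)$. A support of a constraint is an assignment of a value from its domain to each variable that satisfies the constraint; a constraint is generalized arc consistent (GAC) iff every value in every variable's domain belongs to some support. For distinct values $a,b$, $\mathrm{Precedence}([a,b],[X_1,\dots,X_n])$ holds iff $\min\{i \mid X_i=a \text{ or } i=n+1\} < \min\{i \mid X_i=b \text{ or } i=n+2\}$ (i.e. if $b$ is taken by some $X_i$ then $a$ is taken by some $X_l$ with $l<i$). For distinct values $v_1,\dots,v_m$, $\mathrm{Precedence}([v_1,\dots,v_m],[X_1,\dots,X_n])$ holds iff $\mathrm{Precedence}([v_i,v_{i+1}],[X_1,\dots,X_n])$ holds for all $1\le i<m$ (equivalently, for all $1\le i<j\le m$). *)

(* Defs.v *)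
From mathcomp Require Import all_boot.
Set Implicit Arguments. Unset Strict Implicit. Unset Printing Implicit Defensive.

(* An assignment of X_1..X_n is a sequence s = [X_1; ...; X_n] (0-based here).
   min{i | X_i = a or i = n+1}  corresponds (0-based) to  index a s
   (which is size s = n when a does not occur), and
   min{i | X_i = b or i = n+2}  corresponds to  index b s  if b occurs, else n+1. *)
Definition first_or_n1 {T : eqType} (a : T) (s : seq T) : nat := index a s.
Definition first_or_n2 {T : eqType} (b : T) (s : seq T) : nat :=
  if b \in s then index b s else (size s).+1.

Definition precedence2 {T : eqType} (a b : T) (s : seq T) : Prop :=
  first_or_n1 a s < first_or_n2 b s.

Definition precedence {T : eqType} (m : nat) (v : 'I_m -> T) (s : seq T) : Prop :=
  forall i j : 'I_m, j = i.+1 :> nat -> precedence2 (v i) (v j) s.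

Definition is_support {T : eqType} (n : nat) (D : 'I_n -> seq T)
  (c : seq T -> Prop) (t : n.-tuple T) : Prop :=
  (forall j : 'I_n, tnth t j \in D j) /\ c t.

Definition GAC {T : eqType} (n : nat) (D : 'I_n -> seq T) (c : seq T -> Prop) : Prop :=
  forall (i : 'I_n) (x : T), x \in D i ->
    exists t : n.-tuple T, is_support D c t /\ tnth t i = x.

(* Main.v *)
Require Import Defs.
From mathcomp Require Import all_boot.

Lemma prec_trans (T : eqType) (a b c : T) (s : seq T) :
  precedence2 a b s -> precedence2 b c s -> precedence2 a c s.
Proof.
rewrite /precedence2 /first_or_n1 /first_or_n2.
case: ifP => Hb.
  by move=> H1 H2; apply: ltn_trans H1 H2.
rewrite (memNindex (negbT Hb)) => H1.
case: ifP => Hc.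
  by move=> H2; move: (index_mem c s); rewrite Hc => H3; move: (ltn_trans H2 H3); rewrite ltnn.
by move=> _; apply: leq_trans (index_size a s) _.
Qed.

Lemma chain_pair (T : eqType) (m : nat) (v : 'I_m -> T) (s : seq T) :
  precedence v s -> forall i j : 'I_m, i < j -> precedence2 (v i) (v j) s.
Proof.
move=> H i j; case: j => j Hj /=.
elim: j Hj => [|j IH] Hj Hij //.
rewrite leq_eqVlt in Hij; case/orP: Hij => [/eqP Hij|Hij].
  by apply: H => /=; rewrite Hij.
have Hj' : j < m by apply: ltnW.
apply: (@prec_trans _ _ (v (Ordinal Hj'))); first exact: IH.
by apply: H.
Qed.

Lemma gac_list (T : eqType) n (Dn : nat -> seq T) (c : pred (seq T)) (x0 : T)
  (L : seq (seq T)) :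
  (forall i : 'I_n, all (fun x => has (fun s => [&& size s == n,
      all (fun j => nth x0 s j \in Dn j) (iota 0 n), c s & nth x0 s i == x]) L) (Dn i)) ->
  GAC (fun i : 'I_n => Dn i) c.
Proof.
move=> H i x Hx.
have /allP/(_ x Hx)/hasP [s _ /and4P [/eqP Hs /allP Hd Hc /eqP Hi]] := H i.
exists (Tuple (introT eqP Hs)); split; last by rewrite (tnth_nth x0).
split=> [j|//]; rewrite (tnth_nth x0); apply: Hd; rewrite mem_iota /=; exact: ltn_ord.
Qed.

Definition Dn : nat -> seq nat := fun i => nth [::] [:: [:: 0; 3]; [:: 1; 3]; [:: 1; 2]] i.
Definition Dw : 'I_3 -> seq nat := fun i => Dn i.
Definition vw : 'I_3 -> nat := fun i => val i.
Definition Lw : seq (seq nat) :=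
  [:: [:: 0; 1; 1]; [:: 0; 1; 2]; [:: 0; 3; 1]; [:: 0; 3; 2];
      [:: 3; 1; 1]; [:: 3; 1; 2]; [:: 3; 3; 1]; [:: 3; 3; 2]].

Theorem theorem1 :
  (* (i) for arbitrary values and finite domains *)
  (forall (T : eqType) (m : nat) (v : 'I_m -> T) (n : nat) (D : 'I_n -> seq T),
     2 <= m -> injective v ->
     GAC D (precedence v) ->
     forall i j : 'I_m, i < j -> GAC D (precedence2 (v i) (v j)))
  /\
  (* (ii) a witness where all pairwise constraints are GAC but the chain is not *)
  (exists (m : nat) (v : 'I_m -> nat) (n : nat) (D : 'I_n -> seq nat),
     2 <= m /\ injective v /\
     (forall i j : 'I_m, i < j -> GAC D (precedence2 (v i) (v j))) /\
     ~ GAC D (precedence v)).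
Proof.
split.
  move=> T m v n D _ _ H i j Hij k x Hx.
  have [t [[Hd Hc] Ht]] := H k x Hx.
  by exists t; split=> //; split=> //; apply: chain_pair.
exists 3, vw, 3, Dw; split=> //; split; first by move=> a b; apply: val_inj.
split.
  case=> [[|[|[|?]]] ?] // [[|[|[|?]]] ?] // _;
  apply: (@gac_list _ _ Dn _ 0 Lw); case=> [[|[|[|?]]] ?] //.
move=> H.
have [t [[Hd Hc] Ht]] := H (@Ordinal 3 0 isT) 3 isT.
have H01 := Hc (@Ordinal 3 0 isT) (@Ordinal 3 1 isT) erefl.
have H12 := Hc (@Ordinal 3 1 isT) (@Ordinal 3 2 isT) erefl.
have Hd1 := Hd (@Ordinal 3 1 isT).
have Hd2 := Hd (@Ordinal 3 2 isT).
have Hd0 := Hd (@Ordinal 3 0 isT).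
clear Hc H Hd.
move: Ht H01 H12 Hd1 Hd2 Hd0.
case: t => [[|a [|b [|c [|? ?]]]] //] Hs.
rewrite /tnth /= => -> {a Hs}.
rewrite /Dw /Dn /vw /precedence2 /first_or_n1 /first_or_n2 /= !inE.
by move=> H1 H2 /orP [/eqP Eb|/eqP Eb] /orP [/eqP Ec|/eqP Ec] _;
  subst b c.
Qed.
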